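(* Let $U$ be a Banach space and $F$ a Banach lattice with partial order $\leqslant_F$. Let $A\colon U\to F$ be a linear, continuous and injective operator, let $f\in F$ and let $\bar u\in U$ be the exact solution of $A\bar u=f$. Let $(f^l_n)_{n\in\mathbb N}$, $(f^u_n)_{n\in\mathbb N}$ be sequences in $F$ such that for all $n$: $f^l_{n+1}\geqslant_F f^l_n$, $f^u_{n+1}\leqslant_F f^u_n$, $f^l_n\leqslant_F f\leqslant_F f^u_n$, and $\|f^l_n-f^u_n\|\to 0$ as $n\to\infty$. (There are no errors in the operator $A$.) Define the feasible sets $$U_n=\{u\in U:\ f^l_n\leqslant_F Au\leqslant_F f^u_n\}.$$ Let $R\colon U\to\mathbb R\cup\{+\infty\}$ be a functional satisfying either (I) $R$ is bounded from below on $U$, $R$ is lower semi-continuous, and the level sets $\{u: R(u)\leqslant C\}$ ($C$ constant) are sequentially compact in $U$ in the norm topology; or (II) $R$ is bounded from below on $U$, $R$ is weakly lower semi-continuous, the level sets $\{u: R(u)\leqslant C\}$ are weakly sequentially compact in $U$, and $R$ has the Radon–Riesz property. Let $u_n=\operatorname{argmin}_{u\in U_n}R(u)$. Then $u_n\to\bar u$ strongly in $U$ and $R(u_n)\to R(\bar u)$.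
   Context: A functional $R\colon U\to\mathbb R$ has the Radon–Riesz property if for any sequence $u_n\in U$, weak convergence $u_n\rightharpoonup u_0$ together with convergence of values $R(u_n)\to R(u_0)$ implies strong convergence $u_n\to u_0$. A Banach lattice is a vector lattice with a complete monotone norm ($|x|\leqslant|y|\Rightarrow\|x\|\leqslant\|y\|$). *)

(* Defs.v *)
From HB Require Import structures.
From mathcomp Require Import all_boot all_order all_algebra.
From mathcomp Require Import all_classical all_reals all_analysis.
Set Implicit Arguments. Unset Strict Implicit. Unset Printing Implicit Defensive.
Import Order.TTheory GRing.Theory Num.Theory.
Import numFieldNormedType.Exports.
Local Open Scope classical_set_scope.
Local Open Scope ring_scope.

Definition is_sup2 (F : Type) (le : F -> F -> Prop) (x y s : F) : Prop :=
  le x s /\ le y s /\ (forall t, le x t -> le y t -> le s t).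

(* (F, le) with the norm of F is a Banach lattice:
   le is a partial order compatible with the vector structure (ordered
   vector space), every pair has a supremum (vector lattice), and the norm
   is monotone: |x| <= |y| -> ||x|| <= ||y||, where |x| = sup(x, -x).
   Completeness of the norm is carried by F : completeNormedModType R. *)
Record banach_lattice_order (R : realType) (F : normedModType R)
    (le : F -> F -> Prop) : Prop := {
  bl_refl : forall x, le x x;
  bl_antisym : forall x y, le x y -> le y x -> x = y;
  bl_trans : forall x y z, le x y -> le y z -> le x z;
  bl_add : forall x y z, le x y -> le (x + z) (y + z);
  bl_scale : forall (a : R) x y, 0 <= a -> le x y -> le (a *: x) (a *: y);
  bl_sup : forall x y, exists s, is_sup2 le x y s;
  bl_norm_monotone : forall x y ax ay, is_sup2 le x (- x) ax ->
      is_sup2 le y (- y) ay -> le ax ay -> `|x| <= `|y|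
}.

Definition weak_cvg (R : realType) (U : normedModType R) (u : nat -> U)
    (u0 : U) : Prop :=
  forall phi : {linear U -> R^o}, continuous phi ->
    (fun n => phi (u n)) @ \oo --> phi u0.

Definition subsequence (phi : nat -> nat) : Prop :=
  forall m n, (m < n)%N -> (phi m < phi n)%N.

Local Open Scope ereal_scope.

Definition bounded_below (R : realType) (U : Type) (J : U -> \bar R) : Prop :=
  exists c : R, forall u, c%:E <= J u.

Definition level_sets_seq_compact (R : realType) (U : normedModType R)
    (J : U -> \bar R) : Prop :=
  forall (C : R) (u : nat -> U), (forall n, J (u n) <= C%:E) ->
    exists phi u0, subsequence phi /\ J u0 <= C%:E /\
      (u \o phi) @ \oo --> u0.

Definition level_sets_weak_seq_compact (R : realType) (U : normedModType R)
    (J : U -> \bar R) : Prop :=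
  forall (C : R) (u : nat -> U), (forall n, J (u n) <= C%:E) ->
    exists phi u0, subsequence phi /\ J u0 <= C%:E /\
      weak_cvg (u \o phi) u0.

Definition weakly_lsc (R : realType) (U : normedModType R)
    (J : U -> \bar R) : Prop :=
  forall (u : nat -> U) u0, weak_cvg u u0 -> J u0 <= limn_einf (J \o u).

Definition radon_riesz (R : realType) (U : normedModType R)
    (J : U -> \bar R) : Prop :=
  forall (u : nat -> U) u0, weak_cvg u u0 ->
    (J \o u) @ \oo --> J u0 -> u @ \oo --> u0.

(* Main.v *)
Require Import Defs.
From HB Require Import structures.
From mathcomp Require Import all_boot all_order all_algebra.
From mathcomp Require Import all_classical all_reals all_analysis.
From mathcomp Require Import ring lra.
Import Order.TTheory GRing.Theory Num.Theory.
Import numFieldNormedType.Exports.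
Local Open Scope classical_set_scope.
Local Open Scope ring_scope.


Section HahnBanach.
Variables (R : realType) (F : normedModType R) (x0 : F).
Hypothesis hx0 : x0 != 0.

Definition hb_good (G : set (F * R)) : Prop :=
 [/\ (forall x a b, G (x,a) -> G (x,b) -> a = b),
     (forall x y a b, G (x,a) -> G (y,b) -> G (x + y, a + b)),
     (forall k x a, G (x,a) -> G (k *: x, k * a)) &
     (forall x a, G (x,a) -> a <= `|x|)].

Definition hb_P (G : set (F * R)) : Prop := hb_good G /\ (G = set0 \/ G (x0, `|x0|)).

Lemma hb_chain (C : set (set (F * R))) : C `<=` hb_P -> total_on C subset ->
  hb_P (\bigcup_(X in C) X).
Proof.
move=> CP Ctot; split; first split.
- move=> x a b [X CX Xa] [Y CY Yb].
  have [XY|YX] := Ctot _ _ CX CY.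
  + by have [[h _ _ _] _] := CP _ CY; apply: h (XY _ Xa) Yb.
  + by have [[h _ _ _] _] := CP _ CX; apply: h Xa (YX _ Yb).
- move=> x y a b [X CX Xa] [Y CY Yb].
  have [XY|YX] := Ctot _ _ CX CY.
  + by have [[_ h _ _] _] := CP _ CY; exists Y => //; apply: h (XY _ Xa) Yb.
  + by have [[_ h _ _] _] := CP _ CX; exists X => //; apply: h Xa (YX _ Yb).
- move=> k x a [X CX Xa]; have [[_ _ h _] _] := CP _ CX.
  by exists X => //; apply: h.
- move=> x a [X CX Xa]; have [[_ _ _ h] _] := CP _ CX; exact: h Xa.
have [[X CX Xx]|nX] := pselect (exists2 X, C X & X (x0, `|x0|)).
  by right; exists X.
left; apply/seteqP; split => // p [X CX Xp].
have [_ [X0|Xx]] := CP _ CX.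
  by move: Xp; rewrite X0.
by exfalso; apply: nX; exists X.
Qed.

Definition hb_line : set (F * R) := [set p | exists k : R, p = (k *: x0, k * `|x0|)].

Lemma hb_line_P : hb_P hb_line.
Proof.
split; last by right; exists 1; rewrite scale1r mul1r.
split.
- move=> x a b [k [-> ->]] [k' [hk ->]].
  have : (k - k') *: x0 = 0 by rewrite scalerBl hk subrr.
  by move/eqP; rewrite scaler_eq0 (negbTE hx0) orbF subr_eq0 => /eqP ->.
- move=> x y a b [k [-> ->]] [k' [-> ->]].
  by exists (k + k'); rewrite scalerDl mulrDl.
- move=> c x a [k [-> ->]]; exists (c * k); by rewrite scalerA mulrA.
- move=> x a [k [-> ->]]; rewrite normrZ.
  by apply: ler_wpM2r => //; exact: ler_norm.
Qed.


Lemma hb_zero M : hb_good M -> M (x0, `|x0|) -> M (0, 0).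
Proof. by move=> [_ _ h _] /(h 0); rewrite scale0r mul0r. Qed.

Lemma hb_extend M x1 : hb_good M -> M (0, 0) -> (forall a, ~ M (x1, a)) ->
  exists M', hb_good M' /\ M `<` M'.
Proof.
move=> [Mf Ma Ms Md] M00 nx1.
pose S := [set t | exists y g, M (y, g) /\ t = g - `|y - x1|].
have S0 : S !=set0 by exists (0 - `|0 - x1|); exists 0, 0.
have Sub : ubound S `|x1|.
  move=> _ [y [g [Myg ->]]]; rewrite lerBlDr.
  apply: (le_trans (Md _ _ Myg)).
  have -> : y = (y - x1) + x1 by rewrite subrK.
  by rewrite addrK addrC ler_normD.
have Shas : has_ubound S by exists `|x1|.
pose c := sup S.
have hi : forall y g, M (y, g) -> g - `|y - x1| <= c.
  by move=> y g Myg; apply: ub_le_sup => //; exists y, g.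
have hii : forall z h, M (z, h) -> c <= `|z + x1| - h.
  move=> z h Mzh; apply: ge_sup => // _ [y [g [Myg ->]]].
  rewrite lerBrDr addrAC lerBlDr.
  apply: (le_trans (Md _ _ (Ma _ _ _ _ Myg Mzh))).
  have -> : y + z = (y - x1) + (z + x1) by rewrite addrA addrAC subrK.
  by rewrite [X in _ <= X]addrC ler_normD.
pose M' := [set p | exists y g t, M (y, g) /\ p = (y + t *: x1, g + t * c)].
have Mneg : forall y g, M (y, g) -> M (- y, - g).
  by move=> y g /(Ms (-1)); rewrite !scaleN1r mulN1r.
exists M'; split; first split.
- move=> x a b [y [g [t [Myg [-> ->]]]]] [y' [g' [t' [Myg' [e ->]]]]].
  have [tt|tt] := eqVneq t t'.
    subst t'; move/addIr: e => e; subst y'.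
    by rewrite (Mf _ _ _ Myg Myg').
  exfalso; apply: (nx1 ((t - t')^-1 * (g' - g))).
  have -> : x1 = (t - t')^-1 *: (y' - y).
    have : (t - t') *: x1 = y' - y.
      have -> : y' = y + t *: x1 - t' *: x1 by rewrite e addrK.
      by rewrite scalerBl addrAC [y + _]addrC addrK.
    move=> <-; rewrite scalerA mulVf ?scale1r // subr_eq0 //.
  apply: Ms; apply: Ma => //; exact: Mneg.
- move=> x x' a b [y [g [t [Myg [-> ->]]]]] [y' [g' [t' [Myg' [-> ->]]]]].
  exists (y + y'), (g + g'), (t + t'); split; first exact: Ma.
  by rewrite scalerDl mulrDl !addrA (addrAC y) (addrAC g).
- move=> k x a [y [g [t [Myg [-> ->]]]]].
  exists (k *: y), (k * g), (k * t); split; first exact: Ms.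
  by rewrite scalerDr scalerA mulrDr mulrA.
- move=> x a [y [g [t [Myg [-> ->]]]]].
  have [t0|tn0] := eqVneq t 0.
    by rewrite t0 scale0r mul0r !addr0; exact: Md.
  have [tpos|tneg] := ltP 0 t.
  + have e : t * `|t^-1 *: y + x1| = `|y + t *: x1|.
      rewrite -[t in t * _]ger0_norm ?ltW // -normrZ scalerDr scalerA.
      by rewrite mulfV ?gt_eqF // scale1r addrC.
    have := hii _ _ (Ms t^-1 _ _ Myg).
    rewrite lerBrDr => /(ler_wpM2l (ltW tpos)); rewrite e.
    by rewrite mulrDr mulrA mulfV ?gt_eqF // mul1r addrC.
  + have spos : 0 < - t by rewrite oppr_gt0 lt_neqAle tn0.
    have e : - t * `|(- t)^-1 *: y - x1| = `|y + t *: x1|.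
      rewrite -{1}(ger0_norm (ltW spos)) -normrZ scalerBr scalerA.
      by rewrite mulfV ?gt_eqF // scale1r scaleNr opprK.
    have := hi _ _ (Ms (- t)^-1 _ _ Myg).
    rewrite lerBlDr => /(ler_wpM2l (ltW spos)); rewrite mulrDr e.
    rewrite mulrA mulfV ?gt_eqF // mul1r mulNr => h.
      by move: h; lra.
split.
  by move=> [y g] Myg; exists y, g, 0; rewrite scale0r mul0r !addr0.
move=> /(_ (x1, c)) h; apply: (nx1 c); apply: h.
by exists 0, 0, 1; rewrite add0r scale1r mul1r add0r.
Qed.


Lemma hb_sep : exists phi : {linear F -> R^o}, continuous phi /\ phi x0 != 0.
Proof.
have [M [PM Mmax]] := Zorn_bigcup hb_chain.
have Mx : M (x0, `|x0|).
  case: PM => _ [M0|//]; exfalso; apply: (Mmax hb_line); last exact: hb_line_P.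
  rewrite M0; split => // /(_ (x0, `|x0|)); apply.
  by exists 1; rewrite scale1r mul1r.
have [Mg _] := PM.
have M00 := @hb_zero M Mg Mx.
have tot : forall x, exists a, M (x, a).
  move=> x; apply/not_existsP => nx.
  have [M' [gM' MM']] := @hb_extend M x Mg M00 nx.
  apply: (Mmax M') => //; split => //; right; by case: MM' => + _; apply.
have [g Mg'] := choice tot.
case: Mg => Mf Ma Ms Md.
have glin : linear (g : F -> R^o).
  move=> k x y; apply: (Mf (k *: x + y)); first exact: Mg'.
  by apply: Ma; [apply: Ms|]; exact: Mg'.
pose phi := HB.pack_for {linear F -> R^o} (g : F -> R^o) (GRing.isLinear.Build _ _ _ _ _ glin).
have gb : forall x, `|g x| <= `|x|.
  move=> x; rewrite ler_norml Md ?andbT //.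
  have := Md _ _ (Ms (-1) _ _ (Mg' x)); rewrite scaleN1r normrN mulN1r.
  by rewrite lerNl.
exists phi; split.
  move=> x; apply/cvgrPdist_lt => e e0.
  near=> y.
  have -> : phi x - phi y = phi (x - y) by rewrite raddfB.
  apply: (le_lt_trans (gb _)).
  near: y; by apply: cvgr_dist_lt.
rewrite /= (Mf _ _ _ (Mg' x0) Mx) normr_eq0 //.
Unshelve. all: by end_near.
Qed.

End HahnBanach.



Section Aux.
Variable R : realType.

Lemma lat_bound (F : normedModType R) (le : F -> F -> Prop)
  (hF : banach_lattice_order le) x y g :
  le 0 x -> le x g -> le 0 y -> le y g -> `|x - y| <= `|g|.
Proof.
case: hF => refl _ trans add _ sup mono x0 xg y0 yg.
have subl : forall a b, le 0 b -> le (a - b) a.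
  move=> a b /(add _ _ (a - b)); rewrite add0r [b + _]addrC subrK //.
have g0 : le 0 g by apply: trans xg.
have [s [s1 [s2 s3]]] := sup (x - y) (- (x - y)).
apply: (mono _ _ s g) => //.
- split => //; split; last by [].
  have := add _ _ (- g) g0; rewrite add0r subrr => h; exact: trans h g0.
- apply: s3; first exact: trans (subl _ _ y0) xg.
  by rewrite opprB; exact: trans (subl _ _ x0) yg.
Qed.

Definition subseq_tend (phi : nat -> nat) : subsequence phi -> forall n, (n <= phi n)%N.
Proof.
move=> hphi; elim => // n ih; apply: leq_ltn_trans ih _; exact: hphi.
Qed.

Lemma subseq_cvgi (phi : nat -> nat) : subsequence phi -> phi @ \oo --> \oo.
Proof.
move=> hphi P [N _ HN]; exists N => // n /= hn; apply: HN.
rewrite /=; exact: leq_trans hn (@subseq_tend phi hphi n).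
Qed.

Lemma subseq_comp phi psi : subsequence phi -> subsequence psi ->
  subsequence (phi \o psi).
Proof. by move=> h1 h2 m n /h2 /h1. Qed.

Lemma subsub (U : normedModType R) (v : nat -> U) (l : U) :
  (forall phi, subsequence phi -> exists psi, subsequence psi /\
     (v \o phi \o psi) @ \oo --> l) -> v @ \oo --> l.
Proof.
move=> H; apply: contrapT => nc.
have : ~ (forall e : R, 0 < e -> \forall n \near \oo, `|l - v n| < e).
  by move=> h; apply: nc; apply/cvgrPdist_lt.
move=> /existsNP [e /not_implyP [e0 ne]].
have bad : forall N, exists n, (N <= n)%N /\ ~ (`|l - v n| < e).
  move=> N; apply: contrapT => hN; apply: ne; exists N => // n /= hn.
  apply: contrapT => hv; apply: hN; by exists n.
have [g hg] := choice bad.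
pose phi := fix ph k := if k is k'.+1 then g (ph k').+1 else g 0%N.
have sphi : subsequence phi.
  move=> m n; apply: (@homo_ltn _ phi (fun a b => (a < b)%N)); first by move=> ? ? ?; exact: ltn_trans.
  by move=> i /=; have [+ _] := hg (phi i).+1.
have [psi [spsi cv]] := H _ sphi.
have [N _ HN] := (cvgrPdist_lt _ _).1 cv e e0.
have := HN N (leqnn N); rewrite /comp.
case: (psi N) => [|k] /=.
  by have [_ ?] := hg 0%N.
by have [_ ?] := hg (phi k).+1.
Qed.

Local Open Scope ereal_scope.

Lemma Jcvg (v : nat -> \bar R) (l : \bar R) : (forall n, v n <= l) ->
  l <= limn_einf v -> v @ \oo --> l.
Proof.
move=> vl ll.
have : (-%E \o v) @ \oo --> - l.
  apply: limn_esup_le_cvg; last by move=> n; rewrite /= leeN2.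
  by rewrite limn_esupN leeN2.
move/cvgeN; rewrite oppeK; apply: cvg_trans.
by under eq_fun do rewrite /= oppeK.
Qed.

Lemma lsc_liminf (U : normedModType R) (J : U -> \bar R) (v : nat -> U) l r :
  lower_semicontinuous J -> v @ \oo --> l -> J l = r%:E ->
  J l <= limn_einf (J \o v).
Proof.
move=> lsc vl Jl; rewrite Jl; apply/lee_subgt0Pr => e e0.
have [V Vl VJ] : exists2 V, nbhs l V & forall y, V y -> (r - e)%:E < J y.
  by apply: lsc; rewrite Jl lte_fin ltrBlDr ltrDl.
have [N _ HN] := vl V Vl.
rewrite limn_einf_lim; apply: lime_ge; first exact: is_cvg_einfs.
exists N => // n /= Nn; apply: le_ereal_inf_tmp => _ [k /= nk <-].
apply/ltW/VJ/HN => /=; exact: leq_trans Nn nk.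
Qed.

End Aux.

Local Open Scope ring_scope.


Theorem theorem3 (R : realType) (U F : completeNormedModType R)
  (leF : F -> F -> Prop) (hF : banach_lattice_order leF)
  (A : {linear U -> F}) (A_cont : continuous A) (A_inj : injective A)
  (f : F) (ubar : U) (hAu : A ubar = f)
  (fl fu : nat -> F)
  (hfl_mono : forall n, leF (fl n) (fl n.+1))
  (hfu_mono : forall n, leF (fu n.+1) (fu n))
  (hfl_le : forall n, leF (fl n) f) (hfu_ge : forall n, leF f (fu n))
  (hgap : (fun n => `|fl n - fu n|) @ \oo --> (0 : R))
  (J : U -> \bar R)
  (hJ : (bounded_below J /\ lower_semicontinuous J /\
         level_sets_seq_compact J)
     \/ (bounded_below J /\ weakly_lsc J /\
         level_sets_weak_seq_compact J /\ radon_riesz J))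
  (hJubar : (J ubar < +oo)%E)
  (u : nat -> U)
  (hu : forall n, (leF (fl n) (A (u n)) /\ leF (A (u n)) (fu n)) /\
        (forall v, leF (fl n) (A v) -> leF (A v) (fu n) -> (J (u n) <= J v)%E)) :
  u @ \oo --> ubar /\ (J \o u) @ \oo --> J ubar.
Proof.
have [c hc] : bounded_below J by case: hJ => [[]|[]].
have Jfin : J ubar = (fine (J ubar))%:E.
  rewrite fineK // fin_numE; apply/andP; split; last by rewrite lt_eqF.
  by rewrite gt_eqF // (lt_le_trans _ (hc ubar)) // ltNyr.
set r := fine (J ubar) in Jfin.
have Jle : forall n, (J (u n) <= J ubar)%E.
  by move=> n; apply: (hu n).2; rewrite hAu.
have Jler : forall n, (J (u n) <= r%:E)%E by move=> n; rewrite -Jfin.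
have hAf : (A \o u) @ \oo --> f.
  apply/cvgrPdist_lt => e e0.
  have [N _ HN] := (cvgrPdist_lt _ _).1 hgap e e0.
  exists N => // n /= Nn.
  have := HN n Nn; rewrite /= sub0r normrN; apply: le_lt_trans.
  have [[h1 h2] _] := hu n.
  case: (hF) => _ _ _ add _ _ _.
  have d : forall a b, leF a b -> leF 0 (b - a).
    by move=> a b /(add _ _ (- a)); rewrite subrr.
  have d2 : forall a b x, leF a b -> leF (a - x) (b - x) by move=> a b x; exact: add.
  have := @lat_bound R F leF hF _ _ _ (d _ _ h1) (d2 _ _ (fl n) h2) (d _ _ (hfl_le n)) (d2 _ _ (fl n) (hfu_ge n)).
  rewrite opprB addrA subrK distrC.
  by rewrite normr_id [`|fu n - fl n|]distrC.
have key : forall phi, subsequence phi -> exists psi, subsequence psi /\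
    (u \o phi \o psi) @ \oo --> ubar.
  move=> phi sphi.
  have hAf' : forall psi, subsequence psi ->
      (A \o (u \o phi \o psi)) @ \oo --> f.
    move=> psi spsi.
    exact: (cvg_comp _ _ (subseq_cvgi _ (subseq_comp _ _ sphi spsi)) hAf).
  case: hJ => [[_ [lsc cpt]] | [_ [wlsc [wcpt rr]]]].
  - have [psi [u0 [spsi [_ cv]]]] := cpt r (u \o phi) (fun n => Jler (phi n)).
    exists psi; split => //.
    have c1 : (A \o (u \o phi \o psi)) @ \oo --> A u0.
      exact: (cvg_comp _ _ cv (A_cont u0)).
    have Au0 : A u0 = f := cvg_unique _ c1 (hAf' psi spsi).
    have e : u0 = ubar by by apply: A_inj; rewrite Au0.
    by rewrite -e.
  - have [psi [u0 [spsi [_ wcv]]]] := wcpt r (u \o phi) (fun n => Jler (phi n)).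
    exists psi; split => //.
    have Au0 : A u0 = f.
      apply: contrapT => ne.
      have nz : A u0 - f != 0 by rewrite subr_eq0; apply/eqP.
      have [chi [chic chin]] := @hb_sep _ _ _ nz.
      have cA : continuous (chi \o A).
        by move=> x; apply: continuous_comp; [apply: A_cont | apply: chic].
      have c1 : (fun n => chi (A (u (phi (psi n))))) @ \oo --> (chi (A u0) : R^o).
        exact: (wcv (chi \o A) cA).
      have c2 : (fun n => chi (A (u (phi (psi n))))) @ \oo --> (chi f : R^o).
        exact: (cvg_comp _ _ (hAf' psi spsi) (chic f)).
      have e : chi (A u0) = chi f := cvg_unique (@Rhausdorff R) c1 c2.
      by move: chin; rewrite raddfB /= e subrr eqxx.
    have e : u0 = ubar by by apply: A_inj; rewrite Au0.
    subst u0.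
    apply: rr => //; apply: Jcvg; first by move=> n; exact: Jle.
    exact: wlsc.
have ucv : u @ \oo --> ubar := @subsub R U u ubar key.
split => //.
apply: Jcvg => //.
case: hJ => [[_ [lsc _]] | [_ [wlsc _]]].
  exact: (@lsc_liminf R U J u ubar r lsc ucv Jfin).
apply: wlsc => chi chic.
exact: (cvg_comp _ _ ucv (chic ubar)).
Qed.
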